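(* Let $0<\alpha<1$, $\lambda\in\mathbb{R}$, $\tau>0$, and let $\{v^n\}_{n\ge0}$ be a real sequence. Then for every integer $n\ge1$, $$\mathcal{A}_t^{\alpha} v^{n}\cdot \delta_{t}^{\alpha,\lambda}v^n \geq \frac{1}{2}\Big[\frac{\alpha}{2}e^{\lambda \tau}+\Big(1-\frac{\alpha}{2}\Big)\Big] e^{-\frac{\alpha}{2}\lambda \tau} \delta_{t}^{\alpha,2\lambda} (v^n)^2+\frac{2-\alpha-e^{\lambda \tau}}{4}\tau^{\alpha}e^{-\frac{\alpha}{2}\lambda \tau}(\delta_{t}^{\alpha,\lambda}v^n)^2.$$ In particular, when $\alpha=1$ and $\lambda=0$, $$\frac{v^n+v^{n-1}}{2}\cdot\frac{v^n-v^{n-1}}{\tau}=\frac{(v^n)^2-(v^{n-1})^2}{2\tau}.$$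
   Context: $\mathcal{A}_t^{\alpha}v^n=(1-\frac{\alpha}{2})v^n+\frac{\alpha}{2}v^{n-1}$. $g_k^{\alpha}=(-1)^k\binom{\alpha}{k}$ are the coefficients of $(1-z)^{\alpha}=\sum_{k\ge0}g_k^{\alpha}z^k$, and for a constant $\mu$, $g_k^{\alpha,\mu}=e^{-(k-\frac{\alpha}{2})\mu\tau}g_k^{\alpha}$. For a sequence $\{w^n\}$, $\delta_t^{\alpha,\mu}w^n=\tau^{-\alpha}\sum_{k=0}^{n}g_k^{\alpha,\mu}w^{n-k}$; in particular $\delta_{t}^{\alpha,2\lambda}(v^n)^2=\tau^{-\alpha}\sum_{k=0}^{n}g_{k}^{\alpha,2\lambda}(v^{n-k})^2$. *)

(* Defs.v *)
From HB Require Import structures.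
From mathcomp Require Import all_boot all_order all_algebra.
From mathcomp Require Import all_classical all_reals all_analysis.
Set Implicit Arguments. Unset Strict Implicit. Unset Printing Implicit Defensive.
Import Order.TTheory GRing.Theory Num.Theory.
Local Open Scope ring_scope.

Definition gbinom {R : realType} (a : R) (k : nat) : R :=
  (\prod_(j < k) (a - j%:R)) / (k`!)%:R.

Definition gcoef {R : realType} (a : R) (k : nat) : R :=
  (-1) ^+ k * gbinom a k.

Definition gcoef_mu {R : realType} (a mu tau : R) (k : nat) : R :=
  expR (- ((k%:R - a / 2) * mu * tau)) * gcoef a k.

Definition delta_t {R : realType} (a mu tau : R) (w : nat -> R) (n : nat) : R :=
  tau `^ (- a) * \sum_(k < n.+1) gcoef_mu a mu tau k * w (n - k)%N.

Definition calA {R : realType} (a : R) (v : nat -> R) (n : nat) : R :=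
  (1 - a / 2) * v n + a / 2 * v n.-1.

(* Main.v *)
Require Import Defs.
From HB Require Import structures.
From mathcomp Require Import all_boot all_order all_algebra.
From mathcomp Require Import all_classical all_reals all_analysis.
From mathcomp Require Import ring lra.
Import Order.TTheory GRing.Theory Num.Theory.
Local Open Scope ring_scope.

Section G.
Variable R : realType.
Implicit Types a : R.

Lemma gcoef0 a : gcoef a 0 = 1.
Proof. by rewrite /gcoef /gbinom big_ord0 expr0 mul1r divr1. Qed.

Lemma gcoefS a k : gcoef a k.+1 = gcoef a k * ((k%:R - a) / k.+1%:R).
Proof.
rewrite /gcoef /gbinom big_ord_recr /= factS natrM exprS.
have h1 : (k`!)%:R != 0 :> R by rewrite pnatr_eq0 -lt0n fact_gt0.
have h2 : k.+1%:R != 0 :> R by rewrite pnatr_eq0.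
field. by rewrite h1 addrC natr1 h2.
Qed.

Lemma gcoef1 a : gcoef a 1 = - a.
Proof. rewrite gcoefS gcoef0 mul1r divr1; ring. Qed.

Lemma gcoef_le0 a k : 0 < a < 1 -> gcoef a k.+1 <= 0.
Proof.
move=> /andP[a0 a1]; elim: k => [|k IH]; first by rewrite gcoef1 oppr_le0 ltW.
rewrite gcoefS; apply: mulr_le0_ge0 => //; apply: divr_ge0 => //.
rewrite subr_ge0 -natr1; apply: le_trans (ltW a1) _; rewrite lerDr; exact: ler0n.
Qed.

Lemma gsum a n : 0 < a -> \sum_(k < n.+1) gcoef a k = - gcoef a n.+1 * n.+1%:R / a.
Proof.
move=> a0; have an : a != 0 by rewrite gt_eqF.
elim: n => [|n IH].
  by rewrite big_ord_recl big_ord0 gcoef1 gcoef0; field.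
rewrite big_ord_recr /= IH (gcoefS a n.+1).
have h2 : n.+2%:R != 0 :> R by rewrite pnatr_eq0.
field. by rewrite an addrC -[2]/(1+1) addrA !natr1 h2.
Qed.

Lemma gsum_ge0 a n : 0 < a < 1 -> 0 <= \sum_(k < n.+1) gcoef a k.
Proof.
move=> ha; have /andP[a0 _] := ha; rewrite gsum //.
apply: divr_ge0; last exact: ltW.
apply: mulr_ge0; last exact: ler0n.
by rewrite oppr_ge0 gcoef_le0.
Qed.
End G.

Section K.
Variable R : realType.

Lemma sq_sum (g y : nat -> R) (c : R) n :
  \sum_(k < n) g k * (c - y k) ^+ 2 =
  c ^+ 2 * \sum_(k < n) g k - 2 * c * \sum_(k < n) g k * y k + \sum_(k < n) g k * y k ^+ 2.
Proof.
rewrite !mulr_sumr -sumrB -big_split /=; apply: eq_bigr => k _; ring.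
Qed.

Lemma key (a E : R) (m : nat) (y : nat -> R) : 0 < a < 1 -> 0 < E ->
  1/2*(a/2*E + (1-a/2)) * (\sum_(k < m.+2) gcoef a k * y k ^+ 2)
   + (2-a-E)/4 * (\sum_(k < m.+2) gcoef a k * y k) ^+ 2
  <= ((1-a/2) * y 0%N + a/2*(E * y 1%N)) * (\sum_(k < m.+2) gcoef a k * y k).
Proof.
move=> ha E0; have /andP[a0 a1] := ha.
set S := \sum_(k < m.+2) gcoef a k * y k.
set M2 := \sum_(k < m.+2) gcoef a k * y k ^+ 2.
set P := \sum_(k < m.+2) gcoef a k.
have P0 : 0 <= P by apply: gsum_ge0.
have i1 : 0 <= 2 * y 0%N * S - M2 - S ^+ 2.
  have := sq_sum (gcoef a) y (y 0%N - S) m.+2; rewrite -/S -/M2 -/P.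
  rewrite big_ord_recl /= gcoef0 mul1r.
  set U := \sum_(i < m.+1) _ => h.
  have U0 : U <= 0.
    apply: sumr_le0 => i _; apply: mulr_le0_ge0; last exact: sqr_ge0.
    exact: gcoef_le0.
  have hU : U = (y 0%N - S) ^+ 2 * P - 2 * (y 0%N - S) * S + M2 - (y 0%N - S - y 0%N) ^+ 2.
    by rewrite -h; ring.
  have -> : 2 * y 0%N * S - M2 - S ^+ 2 = P * (y 0%N - S) ^+ 2 - U.
    by rewrite hU; ring.
  apply: addr_ge0; first by apply: mulr_ge0 => //; exact: sqr_ge0.
  by rewrite oppr_ge0.
have i2 : 0 <= 2 * y 0%N * S - M2 - a * (y 0%N - y 1%N) ^+ 2.
  have := sq_sum (gcoef a) y (y 0%N) m.+2; rewrite -/S -/M2 -/P.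
  rewrite big_ord_recl /= gcoef0 big_ord_recl /= gcoef1.
  set T := \sum_(i < m) _ => h.
  have T0 : T <= 0.
    apply: sumr_le0 => i _; apply: mulr_le0_ge0; last exact: sqr_ge0.
    exact: gcoef_le0.
  have hT : T = y 0%N ^+ 2 * P - 2 * y 0%N * S + M2 + a * (y 0%N - y 1%N) ^+ 2.
    by rewrite -h /bump /=; ring.
  have -> : 2 * y 0%N * S - M2 - a * (y 0%N - y 1%N) ^+ 2 = y 0%N ^+ 2 * P - T.
    by rewrite hT; ring.
  apply: addr_ge0; first by apply: mulr_ge0 => //; exact: sqr_ge0.
  by rewrite oppr_ge0.
rewrite -subr_ge0.
have -> : ((1 - a / 2) * y 0%N + a / 2 * (E * y 1%N)) * S -
   (1 / 2 * (a / 2 * E + (1 - a / 2)) * M2 + (2 - a - E) / 4 * S ^+ 2) =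
   (2 - a) / 4 * (2 * y 0%N * S - M2 - S ^+ 2)
   + E / 4 * ((S - a * (y 0%N - y 1%N)) ^+ 2 + a * (2 * y 0%N * S - M2 - a * (y 0%N - y 1%N) ^+ 2)).
  by field.
apply: addr_ge0; apply: mulr_ge0.
- apply: divr_ge0 => //; lra.
- exact: i1.
- apply: divr_ge0 => //; exact: ltW.
apply: addr_ge0; first exact: sqr_ge0.
apply: mulr_ge0 => //; exact: ltW.
Qed.
End K.

Lemma gcoef1_0 (R : realType) k : gcoef (1 : R) k.+2 = 0.
Proof.
elim: k => [|k IH]; last by rewrite gcoefS IH mul0r.
by rewrite gcoefS subrr mul0r mulr0.
Qed.

Section M.
Variable R : realType.

Definition yy (l t : R) (v : nat -> R) n (k : nat) := expR (- (k%:R * l * t)) * v (n - k)%N.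

Lemma delta_rw a l t v n : delta_t a l t v n =
  t `^ (- a) * (expR (a / 2 * l * t) * \sum_(k < n.+1) gcoef a k * yy l t v n k).
Proof.
rewrite /delta_t; congr (_ * _); rewrite mulr_sumr; apply: eq_bigr => k _.
have e : expR (- ((k%:R - a / 2) * l * t)) = expR (a / 2 * l * t) * expR (- (k%:R * l * t)).
  by rewrite -expRD; congr expR; ring.
rewrite /gcoef_mu e /yy; ring.
Qed.

Lemma delta_rw2 a l t v n : delta_t a (2 * l) t (fun m => v m ^+ 2) n =
  t `^ (- a) * (expR (a / 2 * l * t) ^+ 2 * \sum_(k < n.+1) gcoef a k * yy l t v n k ^+ 2).
Proof.
rewrite /delta_t; congr (_ * _); rewrite mulr_sumr; apply: eq_bigr => k _.
have e : expR (- ((k%:R - a / 2) * (2 * l) * t)) = expR (a / 2 * l * t) ^+ 2 * expR (- (k%:R * l * t)) ^+ 2.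
  by rewrite !expr2 -!expRD; congr expR; ring.
rewrite /gcoef_mu e /yy; ring.
Qed.
End M.
Arguments yy {R}.

Theorem lemma4p2 (R : realType) (alpha lambda tau : R) (v : nat -> R)
  (halpha0 : 0 < alpha) (halpha1 : alpha < 1) (htau : 0 < tau) :
  (forall n : nat, (1 <= n)%N ->
     calA alpha v n * delta_t alpha lambda tau v n >=
       1 / 2 * (alpha / 2 * expR (lambda * tau) + (1 - alpha / 2))
         * expR (- (alpha / 2 * lambda * tau))
         * delta_t alpha (2 * lambda) tau (fun m => v m ^+ 2) n
     + (2 - alpha - expR (lambda * tau)) / 4 * tau `^ alpha
         * expR (- (alpha / 2 * lambda * tau))
         * (delta_t alpha lambda tau v n) ^+ 2)
  /\
  (forall n : nat, (1 <= n)%N ->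
     calA 1 v n * delta_t 1 0 tau v n
       = 1 / 2 * delta_t 1 0 tau (fun m => v m ^+ 2) n
     /\ (v n + v n.-1) / 2 * ((v n - v n.-1) / tau)
       = (v n ^+ 2 - v n.-1 ^+ 2) / (2 * tau)).
Proof.
split.
  case=> [//|m] _.
  rewrite delta_rw2 delta_rw.
  set E := expR (lambda * tau).
  have ha : 0 < alpha < 1 by rewrite halpha0 halpha1.
  have := @key R alpha E m (yy lambda tau v m.+1) ha (expR_gt0 (lambda * tau)).
  have y0 : yy lambda tau v m.+1 0%N = v m.+1 by rewrite /yy !mul0r oppr0 expR0 mul1r subn0.
  have y1 : E * yy lambda tau v m.+1 1%N = v m.
    rewrite /yy mul1r subSS subn0 mulrA /E -expRD subrr expR0 mul1r //.
  rewrite y0 y1 -/E.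
  set M2 := \sum_(k < m.+2) gcoef alpha k * yy lambda tau v m.+1 k ^+ 2.
  set S := \sum_(k < m.+2) gcoef alpha k * yy lambda tau v m.+1 k.
  move=> hk.
  set X := expR (alpha / 2 * lambda * tau).
  set K := tau `^ (- alpha).
  have X0 : 0 < X by apply: expR_gt0.
  have K0 : 0 < K by apply: powR_gt0.
  have eK : tau `^ alpha = K^-1 by rewrite /K powRN invrK.
  rewrite expRN -/X eK /calA.
  have -> : 1 / 2 * (alpha / 2 * E + (1 - alpha / 2)) * X^-1 * (K * (X ^+ 2 * M2)) +
    (2 - alpha - E) / 4 * K^-1 * X^-1 * (K * (X * S)) ^+ 2
    = K * X * (1 / 2 * (alpha / 2 * E + (1 - alpha / 2)) * M2 + (2 - alpha - E) / 4 * S ^+ 2).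
    field; by rewrite !gt_eqF.
  have -> : ((1 - alpha / 2) * v m.+1 + alpha / 2 * v m.+1.-1) * (K * (X * S))
    = K * X * (((1 - alpha / 2) * v m.+1 + alpha / 2 * v m) * S) by rewrite /=; ring.
  by apply: ler_wpM2l => //; apply: mulr_ge0; apply: ltW.
case=> [//|m] _.
have d1 : forall w : nat -> R, delta_t 1 0 tau w m.+1 = (w m.+1 - w m) / tau.
  move=> w; rewrite /delta_t powRN powRr1 ?ltW // big_ord_recl big_ord_recl /=.
  rewrite big1 => [|i _]; last first.
    by rewrite /gcoef_mu gcoef1_0 mulr0 mul0r.
  rewrite /gcoef_mu !mulr0 ?mul0r ?oppr0 ?expR0  !mul1r gcoef0 gcoef1 subn0 subSS subn0 /bump /=.
  ring.
split; last by rewrite /=; by field; rewrite gt_eqF.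
rewrite !d1 /calA /=; by field; rewrite gt_eqF.
Qed.
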